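(* For any loxodromic element $r\in\mathrm{Spin}(1,n)$ we have \[\ell(r)\ \geq\ 2\cosh^{-1}(|r_{\mathbb{R}}|).\]
   Context: Let $\tilde Q=y_0^2-y_1^2-\cdots-y_n^2$ on $E=\mathbb{R}^{n+1}$ with orthogonal basis $e_0,\dots,e_n$. The Clifford algebra $\mathscr{C}(\tilde Q,\mathbb{R})$ is the tensor algebra of $E$ modulo the relations $x\otimes y+y\otimes x=2\Phi(x,y)$ ($\Phi$ the bilinear form of $\tilde Q$); it has basis $e_M=e_{\mu_1}\cdots e_{\mu_\nu}$ for subsets $M=\{\mu_1<\dots<\mu_\nu\}$ (with $e_\emptyset=1$), and every $s$ is uniquely $s=s_{\mathbb{R}}\cdot 1+\sum_{M\neq\emptyset}s_Me_M$; $s_{\mathbb{R}}$ is the real part of $s$. The anti-involution $*$ is defined by $e_M^*=(-1)^{\nu(\nu-1)/2}e_M$, $\nu=|M|$. The even subalgebra $\mathscr{C}^+$ is spanned by $e_M$ with $|M|$ even, and $\mathrm{Spin}(1,n)=\{s\in\mathscr{C}^+ : sEs^*\subseteq E,\ ss^*=1\}$. Each $s\in \mathrm{Spin}(1,n)$ acts on hyperbolic $n$-space (the sheet with $y_0>0$ of $\{\tilde Q=1\}$, with the induced metric from $-\tilde Q$) by the orientation-preserving isometry $\varphi_s(x)=sxs^*$; $s$ is called loxodromic if $\varphi_s$ fixes exactly two points on the boundary at infinity, and $\ell(s)=\inf_x d(x,\varphi_s(x))$ is its translation length. *)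

(* Defs.v *)
From HB Require Import structures.
From mathcomp Require Import all_boot all_order all_algebra.
From mathcomp Require Import all_classical all_reals exp.
Set Implicit Arguments. Unset Strict Implicit. Unset Printing Implicit Defensive.
Import Order.TTheory GRing.Theory Num.Theory.
Local Open Scope ring_scope.


Definition acosh (R : realType) (x : R) : R := ln (x + Num.sqrt (x ^+ 2 - 1)).

(* The Clifford algebra C(Q~, R) of Q~ = y0^2 - y1^2 - ... - yn^2 on R^(n+1),
   represented in the basis e_M, M a subset of {0,..,n}:
   s = sum_M (s M) e_M. *)
Notation cl R n := {ffun {set 'I_n.+1} -> R}.

Definition qdiag (R : realType) (n : nat) (i : 'I_n.+1) : R :=
  if val i == 0%N then 1 else -1.

(* e_M e_N = (-1)^{#{(i,j) : i in M, j in N, j < i}} (prod_{i in M cap N} Q(e_i)) e_{M Delta N},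
   which is the product in the quotient of the tensor algebra by
   x (x) y + y (x) x = 2 Phi(x,y) for the orthogonal basis e_0..e_n. *)
Definition blade_sign (R : realType) (n : nat) (M N : {set 'I_n.+1}) : R :=
  (-1) ^+ #|[set p : 'I_n.+1 * 'I_n.+1 | (p.1 \in M) && (p.2 \in N) && (val p.2 < val p.1)%N]|
  * \prod_(i in M :&: N) qdiag R i.

Definition symdiff (n : nat) (M N : {set 'I_n.+1}) : {set 'I_n.+1} :=
  (M :\: N) :|: (N :\: M).

Definition clmul (R : realType) (n : nat) (s t : cl R n) : cl R n :=
  [ffun K => \sum_(M : {set 'I_n.+1}) \sum_(N : {set 'I_n.+1} | symdiff M N == K)
               s M * t N * blade_sign R M N].

Definition clone (R : realType) (n : nat) : cl R n :=
  [ffun K => if K == finset.set0 then 1 else 0].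

Definition realpart (R : realType) (n : nat) (s : cl R n) : R := s finset.set0.

Definition clstar (R : realType) (n : nat) (s : cl R n) : cl R n :=
  [ffun M : {set 'I_n.+1} => (-1) ^+ ((#|M| * (#|M|).-1) %/ 2) * s M].

Definition is_even (R : realType) (n : nat) (s : cl R n) : Prop :=
  forall M : {set 'I_n.+1}, odd #|M| -> s M = 0.

Definition is_vec (R : realType) (n : nat) (s : cl R n) : Prop :=
  forall M : {set 'I_n.+1}, #|M| != 1%N -> s M = 0.

Definition Phi (R : realType) (n : nat) (x y : cl R n) : R :=
  \sum_(i : 'I_n.+1) qdiag R i * x [set i] * y [set i].

Definition is_spin (R : realType) (n : nat) (s : cl R n) : Prop :=
  [/\ is_even s,
      (forall x : cl R n, is_vec x -> is_vec (clmul (clmul s x) (clstar s))) &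
      clmul s (clstar s) = clone R n].

Definition phi_s (R : realType) (n : nat) (s x : cl R n) : cl R n :=
  clmul (clmul s x) (clstar s).

Definition hyp (R : realType) (n : nat) : set (cl R n) :=
  [set x | is_vec x /\ Phi x x = 1 /\ 0 < x [set ord0]%SET]%classic.

(* Riemannian distance for the metric induced by -Q~:
   cosh d(x,y) = Phi(x,y). *)
Definition hdist (R : realType) (n : nat) (x y : cl R n) : R := acosh (Phi x y).

(* boundary at infinity: future null rays {c v : c > 0}, Q~(v) = 0, v_0 > 0 *)
Definition future_null (R : realType) (n : nat) (v : cl R n) : Prop :=
  is_vec v /\ Phi v v = 0 /\ 0 < v [set ord0].

Definition same_ray (R : realType) (n : nat) (u v : cl R n) : Prop :=
  exists2 c : R, 0 < c & forall M : {set 'I_n.+1}, u M = c * v M.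

Definition fixes_bdry (R : realType) (n : nat) (s v : cl R n) : Prop :=
  same_ray (phi_s s v) v.

Definition loxodromic (R : realType) (n : nat) (s : cl R n) : Prop :=
  exists v w : cl R n,
    [/\ future_null v /\ future_null w, ~ same_ray v w,
        fixes_bdry s v, fixes_bdry s w &
        forall u, future_null u -> fixes_bdry s u -> same_ray u v \/ same_ray u w].

Definition transl_length (R : realType) (n : nat) (s : cl R n) : R :=
  inf [set hdist x (phi_s s x) | x in @hyp R n]%classic.

(* Main.v *)
Require Import Defs.
From HB Require Import structures.
From mathcomp Require Import all_boot all_order all_algebra.
From mathcomp Require Import all_classical all_reals exp.
From mathcomp Require Import ring lra zify.
Import Order.TTheory GRing.Theory Num.Theory.

Lemma card_boolsum (T : finType) (P : pred T) : #|[set p | P p]| = \sum_p (P p : nat).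
Proof. by rewrite -sum1_card big_mkcond /=; apply: eq_bigr => p _; rewrite inE; case: (P p). Qed.

Lemma card_pairs_gen (k : nat) (A : {set 'I_k}) :
  #|[set p : 'I_k * 'I_k | (p.1 \in A) && (p.2 \in A) && (val p.2 < val p.1)%N]|
   = (#|A| * (#|A|).-1) %/ 2.
Proof.
rewrite card_boolsum.
set X := \sum_p _.
have tot : (\sum_(p : 'I_k * 'I_k) (((p.1 \in A) && (p.2 \in A)) : nat) = #|A| * #|A|)%N.
  rewrite -(pair_bigA _ (fun i j => (((i \in A) && (j \in A)) : nat))) /=.
  have cA : (\sum_(i : 'I_k) ((i \in A) : nat) = #|A|)%N.
    by rewrite -sum1_card [RHS]big_mkcond /=; apply: eq_bigr => i _; case: (i \in A).
  rewrite -cA big_distrl /=; apply: eq_bigr => i _.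
  rewrite big_distrr /=; apply: eq_bigr => j _.
  by case: (i \in A); case: (j \in A).
have sw : (\sum_(p : 'I_k * 'I_k) (((p.1 \in A) && (p.2 \in A) && (val p.1 < val p.2)%N) : nat) = X)%N.
  rewrite (reindex_inj (h := fun p : 'I_k * 'I_k => (p.2, p.1))) /=.
    by apply: eq_bigr => p _; case: (p.1 \in A); case: (p.2 \in A).
  by move=> [a b] [c d] [-> ->].
have dg : (\sum_(p : 'I_k * 'I_k) (((p.1 \in A) && (p.2 \in A) && (val p.1 == val p.2)%N) : nat) = #|A|)%N.
  rewrite -(pair_bigA _ (fun i j => (((i \in A) && (j \in A) && (val i == val j)) : nat))) /=.
  rewrite -sum1_card [RHS]big_mkcond /=; apply: eq_bigr => i _.
  rewrite (bigD1 i) //= eqxx andbT andbb big1 ?addn0; first by case: (i \in A).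
  by move=> j /negbTE; rewrite eq_sym => ji; rewrite (inj_eq val_inj) ji andbF.
have : (X + X + #|A| = #|A| * #|A|)%N.
  rewrite -tot -{2}sw -dg -!big_split /=; apply: eq_bigr => p _.
  case: (p.1 \in A); case: (p.2 \in A) => //=.
  by case: ltngtP.
move=> H. have ->: (#|A| * (#|A|).-1 = X * 2)%N by nia. by rewrite mulnK.
Qed.

Local Open Scope ring_scope.


Section Cl.
Variable R : realType.
Variable n : nat.
Local Notation I := 'I_n.+1.
Local Notation S := {set 'I_n.+1}.

Definition sgn (b : bool) : R := if b then -1 else 1.
Lemma sgnM a b : sgn a * sgn b = sgn (a (+) b).
Proof. by case: a; case: b; rewrite /sgn /= ?mulr1 ?mul1r ?mulrNN ?mulr1. Qed.

Definition qf (b : bool) (i : I) : R := if b then qdiag R i else 1.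
Lemma qdiag2 (i : I) : qdiag R i * qdiag R i = 1.
Proof. by rewrite /qdiag; case: ifP => _; rewrite ?mulr1 ?mulrNN ?mulr1. Qed.

Lemma in_symdiff (M N : S) i : (i \in symdiff M N) = (i \in M) (+) (i \in N).
Proof. by rewrite /symdiff !inE; case: (i \in M); case: (i \in N). Qed.
Lemma symdiffC (M N : S) : symdiff M N = symdiff N M.
Proof. by apply/setP => i; rewrite !in_symdiff addbC. Qed.
Lemma symdiffA (M N K : S) : symdiff M (symdiff N K) = symdiff (symdiff M N) K.
Proof. by apply/setP => i; rewrite !in_symdiff addbA. Qed.
Lemma symdiffK (M N : S) : symdiff M (symdiff M N) = N.
Proof. by apply/setP => i; rewrite !in_symdiff addKb. Qed.
Lemma symdiff0 (M : S) : symdiff M finset.set0 = M.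
Proof. by apply/setP => i; rewrite !in_symdiff inE addbF. Qed.
Lemma symdiffv (M : S) : symdiff M M = finset.set0.
Proof. by apply/setP => i; rewrite !in_symdiff inE addbb. Qed.

Definition pairb (M N : S) (p : I * I) : bool :=
  (p.1 \in M) && (p.2 \in N) && (val p.2 < val p.1)%N.

Lemma sgn_card (P : pred (I * I)) : (-1) ^+ #|[set p | P p]| = \prod_p sgn (P p) :> R.
Proof.
rewrite -prodr_const big_mkcond /=; apply: eq_bigr => p _.
by rewrite inE /sgn.
Qed.

Lemma sgE (M N : S) : blade_sign R M N =
  \prod_p sgn (pairb M N p) * \prod_i qf ((i \in M) && (i \in N)) i.
Proof.
rewrite /blade_sign sgn_card; congr (_ * _).
by rewrite big_mkcond /=; apply: eq_bigr => i _; rewrite inE /qf.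
Qed.

Lemma symdiffKr (M N : S) : symdiff (symdiff N M) M = N.
Proof. by apply/setP => i; rewrite !in_symdiff addbK. Qed.

Definition rsg (A : S) : R := (-1) ^+ ((#|A| * (#|A|).-1) %/ 2).

Lemma rE (A : S) : rsg A = \prod_p sgn (pairb A A p).
Proof. by rewrite /rsg -sgn_card card_pairs_gen. Qed.

Lemma cocycle (M N L : S) :
  blade_sign R M N * blade_sign R (symdiff M N) L =
  blade_sign R N L * blade_sign R M (symdiff N L).
Proof.
rewrite !sgE mulrACA [RHS]mulrACA -!big_split /=; congr (_ * _).
  apply: eq_bigr => p _; rewrite !sgnM /pairb !in_symdiff.
  by move: (p.1 \in M) (p.1 \in N) (p.1 \in L) (p.2 \in M) (p.2 \in N) (p.2 \in L)
    (val p.2 < val p.1)%N => [] [] [] [] [] [] [].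
apply: eq_bigr => i _; rewrite /qf !in_symdiff.
by case: (i \in M); case: (i \in N); case: (i \in L); rewrite ?mulr1 ?mul1r.
Qed.

Lemma starsign (M N : S) :
  rsg (symdiff M N) * blade_sign R M N = rsg M * rsg N * blade_sign R N M.
Proof.
rewrite !rE !sgE !mulrA -!big_split /=; congr (_ * _).
  apply: eq_bigr => p _; rewrite !sgnM /pairb !in_symdiff.
  by move: (p.1 \in M) (p.1 \in N) (p.2 \in M) (p.2 \in N)
    (val p.2 < val p.1)%N => [] [] [] [] [].
by apply: eq_bigr => i _; rewrite andbC.
Qed.

Lemma sum_only (A : S) (F : S -> R) : (forall M, M != A -> F M = 0) -> \sum_M F M = F A.
Proof. by move=> H; rewrite (bigD1 A) //= big1 ?addr0 // => M /H. Qed.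

Lemma clmulE (s t : cl R n) K :
  clmul s t K = \sum_M s M * t (symdiff M K) * blade_sign R M (symdiff M K).
Proof.
rewrite ffunE; apply: eq_bigr => M _; rewrite (big_pred1 (symdiff M K)) // => N /=.
by apply/eqP/eqP => [<-|->]; rewrite symdiffK.
Qed.

Lemma clmulE' (s t : cl R n) K :
  clmul s t K = \sum_N s (symdiff N K) * t N * blade_sign R (symdiff N K) N.
Proof.
rewrite clmulE (reindex_inj (h := fun N => symdiff N K)) /=; last first.
  by apply: (can_inj (g := fun N => symdiff N K)) => N; rewrite symdiffKr.
by apply: eq_bigr => N _; rewrite symdiffKr.
Qed.

Lemma clmulA (s t u : cl R n) : clmul (clmul s t) u = clmul s (clmul t u).
Proof.
apply/ffunP => K; rewrite clmulE [RHS]clmulE.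
under eq_bigr do rewrite clmulE !mulr_suml.
rewrite exchange_big /=; apply: eq_bigr => M _.
rewrite clmulE mulr_sumr mulr_suml.
rewrite (reindex_inj (h := symdiff M)) /=; last first.
  by apply: (can_inj (g := symdiff M)) => N; rewrite symdiffK.
apply: eq_bigr => N _; rewrite symdiffK.
set L := symdiff (symdiff M N) K.
have e1 : symdiff N (symdiff N (symdiff M K)) = symdiff M K by rewrite symdiffK.
have e2 : symdiff N (symdiff M K) = L by rewrite /L symdiffA (symdiffC N M).
rewrite e2.
have e3 : symdiff M K = symdiff N L by rewrite -e2 symdiffK.
have := cocycle M N L; rewrite -e3 => H.
transitivity (s M * t N * u L * (blade_sign R M N * blade_sign R (symdiff M N) L)); first by ring.
by rewrite H; ring.
Qed.


Local Notation "a ** b" := (clmul a b) (at level 40, left associativity).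
Local Notation one := (clone R n).
Definition sc (a : R) (s : cl R n) : cl R n := [ffun K => a * s K].
Local Notation "a *c s" := (sc a s) (at level 40).
Lemma scN1 (s : cl R n) : (-1) *c s = - s.
Proof. by apply/ffunP => K; rewrite !ffunE mulN1r. Qed.

Lemma clmulDl (s1 s2 t : cl R n) : (s1 + s2) ** t = s1 ** t + s2 ** t.
Proof.
apply/ffunP => K; rewrite clmulE [RHS]ffunE !clmulE -big_split /=.
by apply: eq_bigr => M _; rewrite ffunE; ring.
Qed.

Lemma clmulDr (s t1 t2 : cl R n) : s ** (t1 + t2) = s ** t1 + s ** t2.
Proof.
apply/ffunP => K; rewrite clmulE [RHS]ffunE !clmulE -big_split /=.
by apply: eq_bigr => M _; rewrite ffunE; ring.
Qed.

Lemma clmulZl (a : R) (s t : cl R n) : (a *c s) ** t = a *c (s ** t).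
Proof.
apply/ffunP => K; rewrite clmulE [RHS]ffunE clmulE mulr_sumr.
by apply: eq_bigr => M _; rewrite ffunE; ring.
Qed.

Lemma clmulZr (a : R) (s t : cl R n) : s ** (a *c t) = a *c (s ** t).
Proof.
apply/ffunP => K; rewrite clmulE [RHS]ffunE clmulE mulr_sumr.
by apply: eq_bigr => M _; rewrite ffunE; ring.
Qed.

Lemma clmulNl (s t : cl R n) : (- s) ** t = - (s ** t).
Proof. by rewrite -scN1 clmulZl scN1. Qed.
Lemma clmulNr (s t : cl R n) : s ** (- t) = - (s ** t).
Proof. by rewrite -scN1 clmulZr scN1. Qed.

Lemma clmul_suml (F : I -> cl R n) t : (\sum_i F i) ** t = \sum_i (F i ** t).
Proof.
apply/ffunP => K; rewrite clmulE sum_ffunE.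
under [RHS]eq_bigr do rewrite clmulE.
rewrite exchange_big /=; apply: eq_bigr => M _.
by rewrite sum_ffunE !mulr_suml.
Qed.

Lemma clmul_sumr (F : I -> cl R n) s : s ** (\sum_i F i) = \sum_i (s ** F i).
Proof.
apply/ffunP => K; rewrite clmulE sum_ffunE.
under [RHS]eq_bigr do rewrite clmulE.
rewrite exchange_big /=; apply: eq_bigr => M _.
by rewrite sum_ffunE mulr_sumr mulr_suml; apply: eq_bigr => i _; ring.
Qed.

Lemma prod_only (T : finType) (a : T) (F : T -> R) :
  (forall p, p != a -> F p = 1) -> \prod_p F p = F a.
Proof. by move=> H; rewrite (bigD1 a) //= big1 ?mulr1 // => p /H. Qed.

Lemma sg0l (K : S) : blade_sign R finset.set0 K = 1.
Proof.
rewrite sgE !big1 ?mulr1 // => [i _|p _]; first by rewrite inE.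
by rewrite /pairb inE.
Qed.

Lemma sg0r (K : S) : blade_sign R K finset.set0 = 1.
Proof.
rewrite sgE !big1 ?mulr1 // => [i _|p _]; first by rewrite inE andbF.
by rewrite /pairb inE andbF.
Qed.

Lemma clmul1l (s : cl R n) : one ** s = s.
Proof.
apply/ffunP => K; rewrite clmulE (sum_only finset.set0).
  by rewrite ffunE eqxx mul1r sg0l mulr1 symdiffC symdiff0.
by move=> M /negbTE HM; rewrite ffunE HM !mul0r.
Qed.

Lemma clmul1r (s : cl R n) : s ** one = s.
Proof.
apply/ffunP => K; rewrite clmulE' (sum_only finset.set0).
  by rewrite ffunE eqxx mulr1 sg0r mulr1 symdiffC symdiff0.
by move=> M /negbTE HM; rewrite ffunE HM mulr0 mul0r.
Qed.

Lemma realpartD (s t : cl R n) : realpart (s + t) = realpart s + realpart t.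
Proof. by rewrite /realpart ffunE. Qed.
Lemma realpartZ a (s : cl R n) : realpart (a *c s) = a * realpart s.
Proof. by rewrite /realpart ffunE. Qed.
Lemma realpart1 : realpart one = 1.
Proof. by rewrite /realpart ffunE eqxx. Qed.

Lemma realpartE (s t : cl R n) :
  realpart (s ** t) = \sum_M s M * t M * blade_sign R M M.
Proof. by rewrite /realpart clmulE; apply: eq_bigr => M _; rewrite symdiff0. Qed.

Lemma realpart_comm (s t : cl R n) : realpart (s ** t) = realpart (t ** s).
Proof. by rewrite !realpartE; apply: eq_bigr => M _; rewrite (mulrC (s M)). Qed.

Lemma clstarE (s : cl R n) M : clstar s M = rsg M * s M.
Proof. by rewrite ffunE. Qed.

Lemma clstarM (s t : cl R n) : clstar (s ** t) = clstar t ** clstar s.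
Proof.
apply/ffunP => K; rewrite clstarE clmulE clmulE' mulr_sumr.
apply: eq_bigr => M _; rewrite !clstarE.
have := starsign M (symdiff M K); rewrite symdiffK => H.
transitivity (s M * t (symdiff M K) * (rsg K * blade_sign R M (symdiff M K))); first by ring.
rewrite H (symdiffC _ K); ring.
Qed.

Lemma clstarD (s t : cl R n) : clstar (s + t) = clstar s + clstar t.
Proof. by apply/ffunP => K; rewrite !ffunE mulrDr. Qed.

Lemma clstar1 : clstar one = one.
Proof. by apply/ffunP => K; rewrite !ffunE; case: eqP => [->|]; rewrite ?cards0 ?mulr0 ?mulr1. Qed.

Lemma clstar_vec (x : cl R n) : is_vec x -> clstar x = x.
Proof.
move=> hx; apply/ffunP => K; rewrite clstarE.
case: (eqVneq #|K| 1%N) => [e|/hx ->]; last by rewrite mulr0.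
by rewrite /rsg e mul1r.
Qed.


Definition bs (A : S) : cl R n := [ffun K => if K == A then 1 else 0].

Lemma sum_vec (F : S -> R) : (forall M : S, #|M| != 1%N -> F M = 0) -> \sum_M F M = \sum_i F [set i].
Proof.
move=> HF; rewrite (bigID (fun M : S => #|M| == 1%N)) /= [X in _ + X]big1 ?addr0; last first.
  by move=> M /HF.
have -> : \sum_(M : S | #|M| == 1%N) F M = \sum_(M in [set [set i] | i : I]) F M.
  by apply: eq_bigl => M; apply/cards1P/imsetP => [[i ->]|[i _ ->]]; exists i.
by rewrite big_imset //= => i j _ _ /set1_inj.
Qed.

Lemma sg11 (i j : I) : blade_sign R [set i] [set j] =
  sgn (val j < val i)%N * (if i == j then qdiag R i else 1).
Proof.
rewrite sgE; congr (_ * _).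
  rewrite (@prod_only _ (i, j)); first by rewrite /pairb !inE !eqxx.
  by move=> [a b]; rewrite xpair_eqE /pairb !inE /= => /negbTE ->.
case: eqP => [<-|/eqP ij].
  rewrite (@prod_only _ i) /qf; first by rewrite !inE eqxx.
  by move=> k /negbTE; rewrite !inE => ->.
by rewrite big1 // => k _; rewrite /qf !inE; case: eqP => // ->; rewrite (negbTE ij).
Qed.

Lemma sgn_lt (i j : I) : i != j -> sgn (val j < val i)%N + sgn (val i < val j)%N = 0.
Proof.
move=> ij; have : val i != val j by rewrite (inj_eq val_inj).
by rewrite /sgn; case: ltngtP => //=; rewrite ?addrN ?addNr.
Qed.

Lemma vec_anticomm (x y : cl R n) : is_vec x -> is_vec y ->
  x ** y + y ** x = (2 * Phi x y) *c one.
Proof.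
move=> hx hy; apply/ffunP => K; rewrite [LHS]ffunE [RHS]ffunE clmulE clmulE'.
rewrite sum_vec; last by move=> M /hx ->; rewrite !mul0r.
rewrite [X in _ + X]sum_vec; last by move=> M /hx ->; rewrite mulr0 mul0r.
rewrite -big_split /=.
case: (eqVneq K finset.set0) => [->|K0].
  rewrite ffunE eqxx mulr1 /Phi mulr_sumr; apply: eq_bigr => i _.
  by rewrite !symdiff0 sg11 eqxx /sgn ltnn; ring.
rewrite ffunE (negbTE K0) mulr0 big1 // => i _.
case: (boolP (#|symdiff [set i] K| == 1%N)) => [/cards1P [j e]|/hy ->]; last by ring.
have ij : i != j.
  apply/eqP => eij; move: K0; rewrite -(symdiffK [set i] K) e eij symdiffv eqxx //.
rewrite e !sg11 (negbTE ij) eq_sym (negbTE ij) !mulr1.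
transitivity (x [set i] * y [set j] * (sgn (val j < val i)%N + sgn (val i < val j)%N)); first by ring.
by rewrite sgn_lt // mulr0.
Qed.

Lemma realpart_vec (x y : cl R n) : is_vec x -> is_vec y -> realpart (x ** y) = Phi x y.
Proof.
move=> hx hy; have := congr1 (@realpart R n) (vec_anticomm _ _ hx hy).
rewrite realpartD realpartZ realpart1 (realpart_comm y x) mulr1 => H.
rewrite -/(realpart (x ** y)) in H. lra.
Qed.


Local Notation P0 := [set (ord0 : 'I_n.+1)].

Lemma mul_b_l (P : S) (t : cl R n) K : (bs P ** t) K = t (symdiff P K) * blade_sign R P (symdiff P K).
Proof.
rewrite clmulE (sum_only P) ?ffunE ?eqxx ?mul1r // => M /negbTE HM.
by rewrite ffunE HM !mul0r.
Qed.

Lemma mul_b_r (P : S) (s : cl R n) K : (s ** bs P) K = s (symdiff P K) * blade_sign R (symdiff P K) P.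
Proof.
rewrite clmulE' (sum_only P) ?ffunE ?eqxx ?mulr1 ?(symdiffC K) // => M /negbTE HM.
by rewrite ffunE HM mulr0 mul0r.
Qed.

Definition eps (M : S) : R := \prod_i qf (i \in M) i.

Lemma eps_sg (M : S) : rsg M * blade_sign R M M = eps M.
Proof.
rewrite rE sgE mulrA -big_split /= big1 ?mul1r.
  by apply: eq_bigr => i _; rewrite andbb.
by move=> p _; rewrite sgnM addbb.
Qed.

Lemma eps0 : eps finset.set0 = 1.
Proof. by rewrite /eps big1 // => i _; rewrite inE. Qed.

Lemma eps_sq (M : S) : eps M ^+ 2 = 1.
Proof.
by rewrite /eps -prodrXl big1 // => i _; rewrite /qf; case: (i \in M); rewrite ?expr2 ?qdiag2 ?mulr1.
Qed.

Lemma eps_le1 (M : S) : eps M <= 1.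
Proof. by have := eps_sq M; move/eqP; rewrite sqrf_eq1 => /orP [/eqP -> | /eqP ->] //; lra. Qed.

Lemma eps_ge1 (M : S) : -1 <= eps M.
Proof. by have := eps_sq M; move/eqP; rewrite sqrf_eq1 => /orP [/eqP -> | /eqP ->] //; lra. Qed.

Lemma qdiag0 : qdiag R (ord0 : 'I_n.+1) = 1.
Proof. by rewrite /qdiag. Qed.

Lemma e0sign (M : S) :
  blade_sign R P0 M * blade_sign R (symdiff P0 M) P0 * (rsg M * blade_sign R M M) = 1.
Proof.
rewrite eps_sg /eps !sgE mulrACA -big_split /= -mulrA.
have -> : \prod_p (sgn (pairb P0 M p) * sgn (pairb (symdiff P0 M) P0 p)) = \prod_p sgn (pairb M P0 p).
  apply: eq_bigr => -[a b] _; rewrite sgnM /pairb !in_symdiff !inE /=.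
  case: (eqVneq a ord0) => [->|a0] /=; first by rewrite ltn0 !andbF.
  by [].
have -> : \prod_p sgn (pairb M P0 p) = \prod_i sgn ((i \in M) && (0 < val i)%N).
  rewrite -(pair_bigA _ (fun i j => sgn (pairb M P0 (i, j)))) /=; apply: eq_bigr => i _.
  rewrite (@prod_only _ ord0); first by rewrite /pairb !inE /= eqxx andbT.
  by move=> j /negbTE; rewrite /pairb !inE /= => ->; rewrite andbF.
have -> : \prod_i qf ((i \in P0) && (i \in M)) i * \prod_i qf ((i \in symdiff P0 M) && (i \in P0)) i * \prod_i qf (i \in M) i
   = \prod_i sgn ((i \in M) && (0 < val i)%N).
  rewrite -!big_split; apply: eq_bigr => i _; rewrite !in_symdiff !inE /qf.
  case: (eqVneq i ord0) => [->|i0] /=.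
    by rewrite /= qdiag0 ltnn andbF !if_same /sgn !mulr1.
  have vi : val i != 0%N by apply: contra i0 => /eqP h; apply/eqP/val_inj.
  rewrite andbF lt0n vi !mul1r /sgn /qdiag (negbTE vi) andbT.
  by case: (i \in M).
rewrite -big_split big1 // => i _.
by rewrite /= sgnM addbb.
Qed.

Lemma e0sandwich (T : cl R n) :
  realpart (((bs P0 ** T) ** bs P0) ** clstar T) = \sum_M T M ^+ 2.
Proof.
rewrite realpartE; apply: eq_bigr => M _.
rewrite mul_b_r mul_b_l symdiffK clstarE.
have := e0sign M => H.
transitivity (T M ^+ 2 * (blade_sign R P0 M * blade_sign R (symdiff P0 M) P0 * (rsg M * blade_sign R M M))); first by ring.
by rewrite H mulr1.
Qed.

Lemma norm_eps (T : cl R n) : realpart (T ** clstar T) = \sum_M eps M * T M ^+ 2.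
Proof.
rewrite realpartE; apply: eq_bigr => M _; rewrite clstarE -eps_sg; ring.
Qed.


Local Notation e0 := (bs P0).

Lemma e0_vec : is_vec e0.
Proof.
move=> M HM; rewrite ffunE; case: eqP => // eM; move: HM; by rewrite eM cards1.
Qed.

Lemma bsP0_single (i : I) : bs P0 [set i] = if i == ord0 then 1 else 0.
Proof. by rewrite ffunE (inj_eq set1_inj). Qed.

Lemma Phi_e0r (x : cl R n) : Phi x e0 = x P0.
Proof.
rewrite /Phi (bigD1 ord0) //= big1 ?addr0; first by rewrite bsP0_single eqxx qdiag0; ring.
by move=> i /negbTE i0; rewrite bsP0_single i0 mulr0.
Qed.

Lemma Phi_e0e0 : Phi e0 e0 = 1.
Proof. by rewrite Phi_e0r ffunE eqxx. Qed.

Lemma e0_at : e0 P0 = 1.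
Proof. by rewrite ffunE eqxx. Qed.

Lemma half_eq (s : cl R n) a : s + s = (2 * a) *c one -> s = a *c one.
Proof.
move/ffunP => H; apply/ffunP => K; have := H K; rewrite !ffunE => HK; lra.
Qed.

Lemma sc1 (s : cl R n) : 1 *c s = s.
Proof. by apply/ffunP => K; rewrite ffunE mul1r. Qed.

Lemma is_vec_phi (s x : cl R n) : is_spin s -> is_vec x -> is_vec (phi_s s x).
Proof. by case=> _ H _ hx; apply: H. Qed.

Lemma key (s x : cl R n) : is_spin s -> hyp x ->
  1 <= Phi x (phi_s s x) /\ 2 * realpart s ^+ 2 - 1 <= Phi x (phi_s s x).
Proof.
move=> hs [hx [hxx hx0]].
have hy := is_vec_phi _ _ hs hx.
case: hs => _ _ hss.
rewrite -(realpart_vec _ _ hx hy) /phi_s.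
set x0 := x P0.
set c := 2 + 2 * x0.
have c0 : 0 < c by rewrite /c /x0; lra.
have ee : e0 ** e0 = one.
  by rewrite -[one]sc1; apply: half_eq; rewrite (vec_anticomm _ _ e0_vec e0_vec) Phi_e0e0.
have xx : x ** x = one.
  by rewrite -[one]sc1; apply: half_eq; rewrite (vec_anticomm _ _ hx hx) hxx.
have anti : x ** e0 + e0 ** x = (2 * x0) *c one.
  by rewrite (vec_anticomm _ _ hx e0_vec) Phi_e0r.
set g := one + x ** e0.
set h := one + e0 ** x.
have gh : g ** h = c *c one.
  rewrite /g /h clmulDl !clmulDr !clmul1l clmul1r.
  have -> : (x ** e0) ** (e0 ** x) = one by rewrite !clmulA -(clmulA e0) ee clmul1l xx.
  move/ffunP: anti => A; apply/ffunP => K; have := A K; rewrite !ffunE /c => AK; lra.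
have hg : h ** g = c *c one.
  rewrite /g /h clmulDl !clmulDr !clmul1l clmul1r.
  have -> : (e0 ** x) ** (x ** e0) = one by rewrite !clmulA -(clmulA x) xx clmul1l ee.
  move/ffunP: anti => A; apply/ffunP => K; have := A K; rewrite !ffunE /c => AK; lra.
have Gx : (g ** e0) ** h = c *c x.
  have -> : g ** e0 = e0 + x by rewrite /g clmulDl clmul1l clmulA ee clmul1r.
  rewrite /h clmulDl !clmulDr !clmul1r.
  have -> : e0 ** (e0 ** x) = x by rewrite -clmulA ee clmul1l.
  have H : (x ** e0) ** x + (e0 ** x) ** x = (2 * x0) *c x.
    by rewrite -clmulDl anti clmulZl clmul1l.
  rewrite (clmulA e0 x x) xx clmul1r in H.
  rewrite -(clmulA x e0 x).
  move/ffunP: H => A; apply/ffunP => K; have := A K; rewrite !ffunE /c => AK; lra.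
have gs : clstar g = h.
  by rewrite /g /h clstarD clstar1 clstarM (clstar_vec _ hx) (clstar_vec _ e0_vec).
have hs : clstar h = g.
  by rewrite /g /h clstarD clstar1 clstarM (clstar_vec _ hx) (clstar_vec _ e0_vec).
set t := (h ** s) ** g.
have ts : clstar t = h ** (clstar s ** g).
  by rewrite /t !clstarM gs hs.
have F1 : c * c * realpart (x ** ((s ** x) ** clstar s)) =
          realpart (((e0 ** t) ** e0) ** clstar t).
  transitivity (realpart ((c *c x) ** ((s ** (c *c x)) ** clstar s))).
    by rewrite !(clmulZl, clmulZr) !realpartZ mulrA.
  rewrite -Gx ts /t.
  rewrite !clmulA (realpart_comm g) !clmulA.
  done.
have F2 : realpart (t ** clstar t) = c * c.
  rewrite ts /t !clmulA (realpart_comm h) !clmulA gh.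
  have gh' : forall X, g ** (h ** X) = c *c X by move=> X; rewrite -clmulA gh clmulZl clmul1l.
  by rewrite gh' !clmulZr clmul1r !realpartZ hss realpart1 mulr1.
have F3 : t finset.set0 = c * realpart s.
  rewrite -/(realpart t) /t clmulA (realpart_comm h) clmulA gh clmulZr clmul1r realpartZ //.
rewrite e0sandwich in F1; rewrite norm_eps in F2.
set A := realpart _ in F1 *.
have i1 : \sum_M eps M * t M ^+ 2 <= \sum_M t M ^+ 2.
  apply: ler_sum => M _; have := eps_le1 M; have := sqr_ge0 (t M); nra.
have i2 : 2 * t finset.set0 ^+ 2 <= \sum_M t M ^+ 2 + \sum_M eps M * t M ^+ 2.
  rewrite -big_split /= (bigD1 finset.set0) //= eps0.
  have : 0 <= \sum_(M | M != finset.set0) (t M ^+ 2 + eps M * t M ^+ 2).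
    apply: sumr_ge0 => M _; have := eps_ge1 M; have := sqr_ge0 (t M); nra.
  lra.
rewrite -F1 -F2 F3 in i1 i2.
have cc : 0 < c * c by apply: mulr_gt0.
split; nra.
Qed.

End Cl.


Lemma acosh_bound (R : realType) (a P : R) : 1 <= P -> 2 * a ^+ 2 - 1 <= P ->
  2 * acosh `|a| <= acosh P.
Proof.
move=> P1 Pa.
set b := `|a|.
have b0 : 0 <= b by rewrite normr_ge0.
have ba : a ^+ 2 = b ^+ 2 by rewrite /b real_normK // num_real.
rewrite ba in Pa.
have sP0 : 0 <= Num.sqrt (P ^+ 2 - 1) by apply: sqrtr_ge0.
have acP : 0 <= acosh P by rewrite /acosh; apply: ln_ge0; lra.
case: (lerP b 1) => hb.
  have -> : acosh b = ln b.
    by rewrite /acosh ler0_sqrtr ?addr0 //; nra.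
  have := ln_le0 hb; lra.
set w := Num.sqrt (b ^+ 2 - 1).
have w0 : 0 <= w by apply: sqrtr_ge0.
have ww : w ^+ 2 = b ^+ 2 - 1 by rewrite /w sqr_sqrtr //; nra.
have bw0 : 0 < b + w by lra.
have e2 : 2 * ln (b + w) = ln ((b + w) ^+ 2).
  by rewrite lnXn // mulr2n; ring.
rewrite /acosh -/w e2 ler_ln ?posrE; last 2 first.
- by apply: exprn_gt0.
- lra.
have key : 2 * b * w <= Num.sqrt (P ^+ 2 - 1).
  have -> : 2 * b * w = Num.sqrt ((2 * b * w) ^+ 2).
    by rewrite sqrtr_sqr ger0_norm //; apply: mulr_ge0 => //; lra.
  apply: ler_wsqrtr.
  have -> : (2 * b * w) ^+ 2 = 4 * b ^+ 2 * w ^+ 2 by ring.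
  rewrite ww; nra.
have -> : (b + w) ^+ 2 = 2 * b ^+ 2 - 1 + 2 * b * w by rewrite sqrrD ww; ring.
lra.
Qed.

Theorem proposition3p1 (R : realType) (n : nat) (r : cl R n) :
  is_spin r -> loxodromic r ->
  transl_length r >= 2 * acosh `|realpart r|.
Proof.
move=> hr _.
rewrite /transl_length; apply: lb_le_inf.
  have he : hyp (bs R n [set ord0]).
    split; first exact: e0_vec.
    by split; [exact: Phi_e0e0 | rewrite e0_at].
  by exists (hdist (bs R n [set ord0]) (phi_s r (bs R n [set ord0]))); exists (bs R n [set ord0]).
move=> v [x hx <-]; have [h1 h2] := key R n r x hr hx.
exact: acosh_bound h1 h2.
Qed.
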